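(* Let $C\to B'\to B$ be resolving morphisms of resolving algebras such that $B'$ is finite over $C$ and $B$ has a basis over $B'$ consisting of one element $x$ of degree $r\le0$ (so $dx\in B'$). Let $A$ be a dg algebra with a fixed morphism $C\to A$. Then the map $\pi_0\mathbf{Hom}_C(B',A)\to h^{r+1}(A)$, $[h]\mapsto[h(dx)]$, is well defined and the sequence $$\pi_0\mathbf{Hom}_C(B,A)\longrightarrow\pi_0\mathbf{Hom}_C(B',A)\longrightarrow h^{r+1}(A)$$ is exact in the middle: an element of $\pi_0\mathbf{Hom}_C(B',A)$ lies in the image of the first map if and only if it maps to $0$ in $h^{r+1}(A)$.
   Context: $k$ is a field of characteristic $0$; dg algebras are graded-commutative unital $k$-algebras with differential of degree $+1$. $C\to B$ is resolving if $B^\natural\cong C^\natural\otimes_kk[x_i]$ for homogeneous $x_i$ of degree $\le0$; finite if the basis can be chosen finite; resolving algebras are those resolving over $k$. $\Omega_n$: algebraic de Rham complex of $\mathrm{Spec}\,k[t_0,\dots,t_n]/(\sum t_i-1)$; $\mathbf{Hom}(B,A)$ is the simplicial set with $n$-simplices the dg morphisms $B\to A\otimes_k\Omega_n$; $\mathbf{Hom}_C(B,A)$ is the fibre of $\mathbf{Hom}(B,A)\to\mathbf{Hom}(C,A)$ over the fixed vertex $C\to A$; $\pi_0$ denotes the set of homotopy classes of vertices; the first map is restriction along $B'\subset B$. *)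

(* Defs.v *)
From mathcomp Require Import all_boot all_order all_algebra.
From Stdlib Require Import Relations.Relation_Definitions Relations.Relation_Operators.
Set Implicit Arguments.
Unset Strict Implicit.
Unset Printing Implicit Defensive.
Import Order.TTheory GRing.Theory Num.Theory.
Local Open Scope ring_scope.

Definition sgnz (R : pzRingType) (z : int) : R := (-1) ^+ `|z|%N.

Definition is_dga (k : fieldType) (A : pzRingType) (alg : k -> A)
  (hd : int -> pred A) (d : A -> A) : Prop :=
  [/\
      (forall a b, alg (a + b) = alg a + alg b) /\
      (forall a b, alg (a * b) = alg a * alg b) /\ alg 1 = 1 /\
      (forall a x, alg a * x = x * alg a),
      (forall n, hd n 0) /\
      (forall n x y, hd n x -> hd n y -> hd n (x + y)) /\
      (forall n a x, hd n x -> hd n (alg a * x)) /\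
      hd 0 1 /\
      (forall m n x y, hd m x -> hd n y -> hd (m + n) (x * y)),
      (* A is the direct sum of the hd n *)
      (forall x, exists s : seq (int * A),
          all (fun p => hd p.1 p.2) s /\ x = \sum_(p <- s) p.2) /\
      (forall s : seq (int * A), uniq (map fst s) ->
          all (fun p => hd p.1 p.2) s -> \sum_(p <- s) p.2 = 0 ->
          all (fun p => p.2 == 0) s),
      (forall m n x y, hd m x -> hd n y -> x * y = sgnz A (m * n) * (y * x))
    &
      (forall x y, d (x + y) = d x + d y) /\
      (forall a x, d (alg a * x) = alg a * d x) /\
      (forall n x, hd n x -> hd (n + 1) (d x)) /\
      (forall x, d (d x) = 0) /\
      (forall m x y, hd m x -> d (x * y) = d x * y + sgnz A m * (x * d y))].

Record dga (k : fieldType) := DGA {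
  car :> pzRingType;
  alg : k -> car;
  hd : int -> pred car;
  dif : car -> car;
  dga_ax : is_dga alg hd dif }.

Arguments alg {k} A _ : rename.
Arguments hd {k} A _ _ : rename.
Arguments dif {k} A _ : rename.

Definition is_dgmor (k : fieldType) (A B : dga k) (f : A -> B) : Prop :=
  [/\ (forall x y, f (x + y) = f x + f y) /\
      (forall x y, f (x * y) = f x * f y),
      f 1 = 1,
      forall a, f (alg A a) = alg B a,
      forall n x, hd A n x -> hd B n (f x)
    & forall x, f (dif A x) = dif B (f x)].

(* Resolving morphisms.  C -> B is resolving w.r.t. homogeneous x_i    *)
(* (i : I, degree deg i <= 0) if the canonical map                     *)
(* C^nat (x) k[x_i] -> B^nat, c (x) m |-> phi c * m(x), is bijective,  *)
(* i.e. the graded monomials in the x_i form a basis of B as a left     *)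
(* C-module.  Graded monomials are written as sequences of indices,    *)
(* sorted for an auxiliary strict total order on I, in which each       *)
(* odd-degree generator occurs at most once.                           *)

Definition strict_total (I : eqType) (ord : rel I) : Prop :=
  [/\ forall i, ~~ ord i i,
      forall i j l, ord i j -> ord j l -> ord i l
    & forall i j, i != j -> ord i j || ord j i].

Definition gr_monomial (I : eqType) (ord : rel I) (deg : I -> int)
  (s : seq I) : bool :=
  sorted (fun i j => (i == j) || ord i j) s &&
  all (fun i => odd `|deg i|%N ==> (count_mem i s <= 1)%N) s.

Definition monom (k : fieldType) (B : dga k) (I : Type) (x : I -> B)
  (s : seq I) : B := \prod_(i <- s) x i.

Definition monomial_basis (k : fieldType) (R : pzRingType) (B : dga k)
  (phi : R -> B) (I : eqType) (ord : rel I) (deg : I -> int) (x : I -> B)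
  : Prop :=
  [/\ strict_total ord,
      forall i, hd B (deg i) (x i) /\ deg i <= 0,
      (forall b : B, exists l : seq (R * seq I),
          all (gr_monomial ord deg) (map snd l) /\
          b = \sum_(p <- l) phi p.1 * monom x p.2)
    & (forall l : seq (R * seq I), uniq (map snd l) ->
          all (gr_monomial ord deg) (map snd l) ->
          \sum_(p <- l) phi p.1 * monom x p.2 = 0 ->
          forall p, p \in l -> p.1 = 0)].

Definition resolving_wrt (k : fieldType) (C B : dga k) (phi : C -> B)
  (I : eqType) (ord : rel I) (deg : I -> int) (x : I -> B) : Prop :=
  is_dgmor phi /\ monomial_basis phi ord deg x.

Definition resolving (k : fieldType) (C B : dga k) (phi : C -> B) : Prop :=
  exists (I : eqType) (ord : rel I) (deg : I -> int) (x : I -> B),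
    resolving_wrt phi ord deg x.

Definition finite_resolving (k : fieldType) (C B : dga k) (phi : C -> B)
  : Prop :=
  exists (I : eqType) (ord : rel I) (deg : I -> int) (x : I -> B)
         (e : seq I),
    (forall i, i \in e) /\ resolving_wrt phi ord deg x.

Definition resolving_alg (k : fieldType) (B : dga k) : Prop :=
  exists (I : eqType) (ord : rel I) (deg : I -> int) (x : I -> B),
    monomial_basis (alg B) ord deg x.

(* A (x) Omega_1.  Omega_1 = k[t] + k[t] dt (t = t_1, t_0 = 1 - t).    *)
(* An element of A (x) Omega_1 is p(t) + q(t) dt with p, q polynomials  *)
(* with coefficients in A, represented by coefficient sequences        *)
(* (compared coefficientwise, trailing zeros irrelevant).  It is        *)
(* homogeneous of degree n iff the coefficients of p lie in A^n and     *)
(* those of q in A^(n-1).  For homogeneous factors of degrees n, n':    *)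
(*  (p + q dt)(p' + q' dt) = pp' + (pq' + (-1)^n' q p') dt,             *)
(*  d(p + q dt) = d_A p + ((-1)^n p' + d_A q) dt                        *)
(* (Koszul signs, d(a (x) w) = da (x) w + (-1)^|a| a (x) dw).           *)

Section PolySeq.
Variable R : pzRingType.
Definition pc (p : seq R) (i : nat) : R := nth 0 p i.
Definition peq (p q : seq R) : Prop := forall i, pc p i = pc q i.
Definition padd (p q : seq R) : seq R :=
  mkseq (fun m => pc p m + pc q m) (maxn (size p) (size q)).
Definition pmul (p q : seq R) : seq R :=
  mkseq (fun m => \sum_(i < m.+1) pc p i * pc q (m - i)) (size p + size q).
Definition pscale (s : R) (p : seq R) : seq R := map (fun a => s * a) p.
Definition pder (p : seq R) : seq R :=
  mkseq (fun m => pc p m.+1 *+ m.+1) (size p).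
Definition pev0 (p : seq R) : R := pc p 0.
Definition pev1 (p : seq R) : R := \sum_(a <- p) a.
End PolySeq.

(* H = (P, Q) : B -> A (x) Omega_1, b |-> P b + Q b dt, is a morphism of *)
(* dg k-algebras (conditions on homogeneous elements suffice since B is  *)
(* the direct sum of its homogeneous parts and H is additive).           *)
Definition is_dgmor_Omega1 (k : fieldType) (B A : dga k)
  (P Q : B -> seq A) : Prop :=
  [/\ forall b b', peq (P (b + b')) (padd (P b) (P b')) /\
                   peq (Q (b + b')) (padd (Q b) (Q b')),
      forall a, peq (P (alg B a)) [:: alg A a] /\ peq (Q (alg B a)) [::],
      peq (P 1) [:: 1] /\ peq (Q 1) [::] /\
      forall n b, hd B n b ->
        (forall i, hd A n (pc (P b) i) /\ hd A (n - 1) (pc (Q b) i)),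
      forall m n b b', hd B m b -> hd B n b' ->
        peq (P (b * b')) (pmul (P b) (P b')) /\
        peq (Q (b * b')) (padd (pmul (P b) (Q b'))
                               (pscale (sgnz A n) (pmul (Q b) (P b'))))
    & forall n b, hd B n b ->
        peq (P (dif B b)) (map (dif A) (P b)) /\
        peq (Q (dif B b)) (padd (pscale (sgnz A n) (pder (P b)))
                                (map (dif A) (Q b)))].

(* The simplicial set Hom_C(B, A) in simplicial degrees 0 and 1, and   *)
(* pi_0 (the equivalence relation generated by the 1-simplices).       *)
(* C -> B is phi, the fixed vertex C -> A is f.                         *)

(* vertices: dg morphisms B -> A (x) Omega_0 = A over C *)
Definition vertexC (k : fieldType) (C B A : dga k) (phi : C -> B)
  (f : C -> A) (h : B -> A) : Prop :=
  is_dgmor h /\ forall c, h (phi c) = f c.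

(* 1-simplices over C: their restriction to C is the degenerate simplex *)
(* c |-> f c (x) 1 on the vertex f.                                     *)
Definition edgeC (k : fieldType) (C B A : dga k) (phi : C -> B)
  (f : C -> A) (P Q : B -> seq A) : Prop :=
  is_dgmor_Omega1 P Q /\
  forall c, peq (P (phi c)) [:: f c] /\ peq (Q (phi c)) [::].

Definition edge_between (k : fieldType) (C B A : dga k) (phi : C -> B)
  (f : C -> A) (h0 h1 : B -> A) : Prop :=
  exists P Q : B -> seq A, edgeC phi f P Q /\
    (forall b, h0 b = pev0 (P b)) /\ (forall b, h1 b = pev1 (P b)).

Definition homotopicC (k : fieldType) (C B A : dga k) (phi : C -> B)
  (f : C -> A) : relation (B -> A) :=
  clos_refl_sym_trans (B -> A) (edge_between phi f).

Definition coboundary (k : fieldType) (A : dga k) (n : int) (z : A) : Prop :=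
  exists a : A, hd A n a /\ z = dif A a.
Arguments coboundary {k} A n z.

(* Main.v *)
Require Import Defs.
From mathcomp Require Import all_boot all_order all_algebra zify.
From Stdlib Require Import Relations.Relation_Definitions Relations.Relation_Operators.
From Stdlib Require Import FunctionalExtensionality.
Set Implicit Arguments.
Unset Strict Implicit.
Unset Printing Implicit Defensive.
Import Order.TTheory GRing.Theory Num.Theory.
Local Open Scope ring_scope.

Lemma sum_if_eq (R : nmodType) (I : eqType) (r : seq I) (i : I) (F : R) :
  uniq r -> i \in r -> \sum_(j <- r) (if j == i then F else 0) = F.
Proof.
elim: r => [|j r IH] //= /andP[jr ur]; rewrite in_cons big_cons.
case: eqVneq => [->|ne] /= ir.
  rewrite big1_seq ?addr0 // => l /andP[_ lr]; case: eqVneq lr => // -> ; by rewrite (negPf jr).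
by rewrite add0r IH.
Qed.

Lemma prod_const_seq (R : pzSemiRingType) (I : Type) (s : seq I) (c : R) :
  \prod_(i <- s) c = c ^+ size s.
Proof. elim: s => [|j s IH]; by rewrite ?big_nil ?big_cons ?IH ?exprS. Qed.

Section DGA.
Variables (k : fieldType) (D : dga k).
Implicit Types (x y : D) (a b : k).

Lemma algD a b : alg D (a + b) = alg D a + alg D b.
Proof. case: (dga_ax D) => [[H _] _ _ _ _]; exact: H. Qed.
Lemma algM a b : alg D (a * b) = alg D a * alg D b.
Proof. case: (dga_ax D) => [[_ [H _]] _ _ _ _]; exact: H. Qed.
Lemma alg1 : alg D 1 = 1.
Proof. case: (dga_ax D) => [[_ [_ [H _]]] _ _ _ _]; exact: H. Qed.
Lemma algC a x : alg D a * x = x * alg D a.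
Proof. case: (dga_ax D) => [[_ [_ [_ H]]] _ _ _ _]; exact: H. Qed.
Lemma hd0 n : hd D n 0.
Proof. case: (dga_ax D) => [_ [H _] _ _ _]; exact: H. Qed.
Lemma hdD n x y : hd D n x -> hd D n y -> hd D n (x + y).
Proof. case: (dga_ax D) => [_ [_ [H _]] _ _ _]; exact: H. Qed.
Lemma hdZ n a x : hd D n x -> hd D n (alg D a * x).
Proof. case: (dga_ax D) => [_ [_ [_ [H _]]] _ _ _]; exact: H. Qed.
Lemma hd1 : hd D 0 1.
Proof. case: (dga_ax D) => [_ [_ [_ [_ [H _]]]] _ _ _]; exact: H. Qed.
Lemma hdM m n x y : hd D m x -> hd D n y -> hd D (m + n) (x * y).
Proof. case: (dga_ax D) => [_ [_ [_ [_ [_ H]]]] _ _ _]; exact: H. Qed.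
Lemma dsum_ex x : exists s : seq (int * D),
  all (fun p => hd D p.1 p.2) s /\ x = \sum_(p <- s) p.2.
Proof. case: (dga_ax D) => [_ _ [H _] _ _]; exact: H. Qed.
Lemma dsum_uniq (s : seq (int * D)) : uniq (map fst s) ->
  all (fun p => hd D p.1 p.2) s -> \sum_(p <- s) p.2 = 0 ->
  all (fun p => p.2 == 0) s.
Proof. case: (dga_ax D) => [_ _ [_ H] _ _]; exact: H. Qed.
Lemma grcomm m n x y : hd D m x -> hd D n y -> x * y = sgnz D (m * n) * (y * x).
Proof. case: (dga_ax D) => [_ _ _ H _]; exact: H. Qed.
Lemma difD x y : dif D (x + y) = dif D x + dif D y.
Proof. case: (dga_ax D) => [_ _ _ _ [H _]]; exact: H. Qed.
Lemma difZ a x : dif D (alg D a * x) = alg D a * dif D x.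
Proof. case: (dga_ax D) => [_ _ _ _ [_ [H _]]]; exact: H. Qed.
Lemma hd_dif n x : hd D n x -> hd D (n + 1) (dif D x).
Proof. case: (dga_ax D) => [_ _ _ _ [_ [_ [H _]]]]; exact: H. Qed.
Lemma difK x : dif D (dif D x) = 0.
Proof. case: (dga_ax D) => [_ _ _ _ [_ [_ [_ [H _]]]]]; exact: H. Qed.
Lemma difM m x y : hd D m x ->
  dif D (x * y) = dif D x * y + sgnz D m * (x * dif D y).
Proof. case: (dga_ax D) => [_ _ _ _ [_ [_ [_ [_ H]]]]]; exact: H. Qed.

Lemma alg0 : alg D 0 = 0.
Proof. have h := algD 0 0; rewrite addr0 in h; apply: (addrI (alg D 0)); by rewrite -h addr0. Qed.
Lemma algN a : alg D (- a) = - alg D a.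
Proof. apply: (addrI (alg D a)); by rewrite -algD !subrr alg0. Qed.
Lemma algMn a n : alg D (a *+ n) = alg D a *+ n.
Proof. by elim: n => [|n IH]; rewrite ?mulr0n ?alg0 // !mulrS algD IH. Qed.
Lemma algnat n : alg D n%:R = n%:R.
Proof. by rewrite algMn alg1. Qed.

Lemma hdN n x : hd D n x -> hd D n (- x).
Proof. by move=> h; rewrite -mulN1r -alg1 -algN; apply: hdZ. Qed.
Lemma hdB n x y : hd D n x -> hd D n y -> hd D n (x - y).
Proof. by move=> *; apply: hdD => //; apply: hdN. Qed.
Lemma hd_sum (I : Type) (r : seq I) (P : pred I) (F : I -> D) n :
  (forall i, P i -> hd D n (F i)) -> hd D n (\sum_(i <- r | P i) F i).
Proof.
move=> H; elim: r => [|i r IH]; rewrite ?big_nil ?big_cons; first exact: hd0.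
by case: ifP => // Pi; apply: hdD => //; apply: H.
Qed.
Lemma hd_sum_seq (I : eqType) (r : seq I) (F : I -> D) n :
  (forall i, i \in r -> hd D n (F i)) -> hd D n (\sum_(i <- r) F i).
Proof. by move=> H; rewrite big_seq; apply: hd_sum. Qed.

Lemma sgnzE z : sgnz D z = (-1) ^+ odd `|z|%N.
Proof. by rewrite /sgnz signr_odd. Qed.
Lemma sgnz_sq z : sgnz D z * sgnz D z = 1.
Proof. by rewrite sgnzE; case: odd; rewrite ?mulrNN mulr1. Qed.
Lemma hd_sgn n z x : hd D n x -> hd D n (sgnz D z * x).
Proof. by rewrite sgnzE; case: odd => h; rewrite ?mulN1r ?mul1r //; apply: hdN. Qed.
Lemma sgnzC z x : sgnz D z * x = x * sgnz D z.
Proof. by rewrite sgnzE; case: odd; rewrite ?mulN1r ?mulrN1 ?mul1r ?mulr1. Qed.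

Lemma dif0 : dif D 0 = 0.
Proof. have h := difD 0 0; rewrite addr0 in h; apply: (addrI (dif D 0)); by rewrite -h addr0. Qed.
Lemma difN x : dif D (- x) = - dif D x.
Proof. apply: (addrI (dif D x)); by rewrite -difD !subrr dif0. Qed.
Lemma difB x y : dif D (x - y) = dif D x - dif D y.
Proof. by rewrite difD difN. Qed.
Lemma dif_sgn z x : dif D (sgnz D z * x) = sgnz D z * dif D x.
Proof. by rewrite sgnzE; case: odd; rewrite ?mulN1r ?mul1r ?difN. Qed.
Lemma dif_sum (I : Type) (r : seq I) (F : I -> D) :
  dif D (\sum_(i <- r) F i) = \sum_(i <- r) dif D (F i).
Proof. by elim: r => [|i r IH]; rewrite ?big_nil ?dif0 // !big_cons difD IH. Qed.

Lemma hdX n x i : hd D n x -> hd D (n * i%:Z) (x ^+ i).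
Proof.
move=> h; elim: i => [|i IH]; first by rewrite expr0 mulr0; exact: hd1.
rewrite exprS; have -> : n * (i.+1)%:Z = n + n * i%:Z by rewrite intS mulrDr mulr1.
exact: hdM.
Qed.

Hypothesis Hk : [pchar k] =i pred0.

Lemma natk_neq0 n : (n.+1)%:R != 0 :> k.
Proof. by have /pcharf0P -> := Hk. Qed.

Lemma alg_invn n x : alg D (n.+1%:R^-1) * (x *+ n.+1) = x.
Proof.
by rewrite mulrnAr -mulrnAl -algMn -[_ *+ n.+1]mulr_natr mulVf ?natk_neq0 // alg1 mul1r.
Qed.

Lemma sq0 n x : hd D n x -> odd `|n|%N -> x * x = 0.
Proof.
move=> h o; have := grcomm h h; rewrite sgnzE abszM oddM o /= expr1 mulN1r.
move/eqP; rewrite -subr_eq0 opprK => /eqP e.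
by rewrite -(alg_invn 1 (x * x)) [(x * x) *+ 2]mulr2n e mulr0.
Qed.

End DGA.



Section Mor.
Variables (k : fieldType) (A B : dga k) (f : A -> B) (Hf : is_dgmor f).

Lemma morD x y : f (x + y) = f x + f y.
Proof. by case: Hf => [[H _] _ _ _ _]; exact: H. Qed.
Lemma morM x y : f (x * y) = f x * f y.
Proof. by case: Hf => [[_ H] _ _ _ _]; exact: H. Qed.
Lemma mor1 : f 1 = 1.
Proof. by case: Hf. Qed.
Lemma moralg a : f (alg A a) = alg B a.
Proof. by case: Hf => [_ _ H _ _]; exact: H. Qed.
Lemma morhd n x : hd A n x -> hd B n (f x).
Proof. by case: Hf => [_ _ _ H _]; exact: H. Qed.
Lemma mordif x : f (dif A x) = dif B (f x).
Proof. by case: Hf => [_ _ _ _ H]; exact: H. Qed.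
Lemma mor0 : f 0 = 0.
Proof. have h := morD 0 0; rewrite addr0 in h; apply: (addrI (f 0)); by rewrite -h addr0. Qed.
Lemma morN x : f (- x) = - f x.
Proof. apply: (addrI (f x)); by rewrite -morD !subrr mor0. Qed.
Lemma morB x y : f (x - y) = f x - f y.
Proof. by rewrite morD morN. Qed.
Lemma morsgn z x : f (sgnz A z * x) = sgnz B z * f x.
Proof. by rewrite !sgnzE; case: odd; rewrite ?mulN1r ?mul1r ?morN. Qed.
Lemma mor_sum (I : Type) (r : seq I) (P : pred I) (F : I -> A) :
  f (\sum_(i <- r | P i) F i) = \sum_(i <- r | P i) f (F i).
Proof.
elim: r => [|i r IH]; rewrite ?big_nil ?mor0 // !big_cons.
by case: ifP => _; rewrite ?morD IH.
Qed.
Lemma morX x n : f (x ^+ n) = f x ^+ n.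
Proof. by elim: n => [|n IH]; rewrite ?expr0 ?mor1 // !exprS morM IH. Qed.
End Mor.

Section Comp.
Variables (k : fieldType) (D : dga k).

Lemma sum_component_zero (s : seq (int * D)) :
  all (fun p => hd D p.1 p.2) s -> \sum_(p <- s) p.2 = 0 ->
  forall n, \sum_(p <- s | p.1 == n) p.2 = 0.
Proof.
move=> hs s0 n.
set ds := undup (map fst s).
set t := [seq (m, \sum_(p <- s | p.1 == m) p.2) | m <- ds].
have ut : uniq (map fst t) by rewrite /t -map_comp map_id undup_uniq.
have at_ : all (fun p => hd D p.1 p.2) t.
  apply/allP => q /mapP[m _ ->] /=; rewrite big_seq_cond; apply: hd_sum => p /andP[ps /eqP <-].
  by move/allP: hs => /(_ p ps).
have st : \sum_(q <- t) q.2 = 0.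
  rewrite big_map /= -[RHS]s0.
  under eq_bigr => m _ do rewrite big_mkcond /=.

  rewrite exchange_big /=; apply: eq_big_seq => p ps.
  under eq_bigr => m _ do rewrite eq_sym.
  by apply: sum_if_eq; rewrite ?undup_uniq // mem_undup; apply: map_f.
have := dsum_uniq ut at_ st => /allP az.
case: (boolP (n \in ds)) => nds.
  by apply/eqP; have := az (n, \sum_(p <- s | p.1 == n) p.2); apply; apply: map_f.
rewrite big1_seq // => p /andP[/eqP pn ps]; case/negP: nds.
by rewrite mem_undup -pn; apply: map_f.
Qed.

Lemma sum_component (s : seq (int * D)) n (b : D) :
  all (fun p => hd D p.1 p.2) s -> hd D n b -> b = \sum_(p <- s) p.2 ->
  b = \sum_(p <- s | p.1 == n) p.2.
Proof.
move=> hs hb e.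
have hs' : all (fun p => hd D p.1 p.2) ((n, - b) :: s) by rewrite /= hdN.
have hz : \sum_(p <- (n, - b) :: s) p.2 = 0 by rewrite big_cons /= e addNr.
have h := @sum_component_zero _ hs' hz n.
rewrite big_cons /= eqxx in h.
by apply/eqP; rewrite eq_sym -subr_eq0 addrC h.
Qed.

Lemma monom_hd (I : eqType) (deg : I -> int) (xs : I -> D) (s : seq I) :
  (forall i, hd D (deg i) (xs i)) -> hd D (\sum_(i <- s) deg i) (monom xs s).
Proof.
move=> H; elim: s => [|i s IH]; rewrite /monom ?big_nil; first exact: hd1.
by rewrite !big_cons; apply: hdM.
Qed.

Lemma resolving_pos (H : resolving_alg D) n (b : D) : 0 < n -> hd D n b -> b = 0.
Proof.
case: H => I [ord [deg [xs [_ hx ex _]]]] n0 hb.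
case: (ex b) => l [_ e].
pose s := [seq (\sum_(i <- p.2) deg i, alg D p.1 * monom xs p.2) | p <- l].
have hs : all (fun p => hd D p.1 p.2) s.
  by apply/allP => q /mapP[p _ ->] /=; apply: hdZ; apply: monom_hd => i; case: (hx i).
have e' : b = \sum_(q <- s) q.2 by rewrite big_map.
rewrite (sum_component hs hb e') big1_seq // => q /andP[/eqP dn /mapP[p _ qe]].
rewrite qe /= in dn; move: n0; rewrite -dn.
have : \sum_(i <- p.2) deg i <= 0 by apply: sumr_le0 => i _; case: (hx i).
by move=> h1 h2; have := lt_le_trans h2 h1; rewrite ltxx.
Qed.
End Comp.



Section Ext.
Variables (k : fieldType) (Hk : [pchar k] =i pred0) (B' B : dga k)
  (iota : B' -> B) (r : int) (x : B)
  (Hiota : resolving_wrt iota (fun _ _ : unit => false) (fun _ => r) (fun _ => x)).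

Lemma iota_mor : is_dgmor iota.
Proof. by case: Hiota. Qed.
Lemma hx : hd B r x.
Proof. by case: Hiota => _ [_ H _ _]; case: (H tt). Qed.
Lemma monomE (s : seq unit) : monom (fun _ => x) s = x ^+ size s.
Proof. exact: prod_const_seq. Qed.

Definition adm (j : nat) := ~~ odd `|r|%N || (j <= 1)%N.

Lemma xX0 j : ~~ adm j -> x ^+ j = 0.
Proof.
rewrite /adm negb_or negbK -ltnNge => /andP[o j2].
rewrite -(subnK j2) exprD expr2 (sq0 Hk hx o) mulr0 //.
Qed.

Lemma sorted_nseq_unit (e : rel unit) j : e tt tt -> sorted e (nseq j tt).
Proof. by move=> ett; elim: j => [|[|j] IH] //=; rewrite ett. Qed.

Lemma U N (c : nat -> B') :
  \sum_(0 <= j < N) iota (c j) * x ^+ j = 0 ->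
  forall j, (j < N)%N -> adm j -> c j = 0.
Proof.
move=> s0 j jN aj.
case: Hiota => _ [_ _ _ Hu].
pose l := [seq (c j, nseq j tt) | j <- [seq j <- index_iota 0 N | adm j]].
change ((c j, nseq j tt).1 = 0); apply: (Hu l)...
- rewrite /l -map_comp; rewrite map_inj_uniq ?filter_uniq ?iota_uniq //.
  by move=> i1 i2 /= /(congr1 size); rewrite !size_nseq.
- apply/allP => s /mapP[p /mapP[i]]; rewrite mem_filter => /andP[ai _] -> -> /=.
  rewrite /gr_monomial sorted_nseq_unit //=; apply/allP => u _; apply/implyP => o.
  rewrite count_nseq /= mul1n; by move: ai; rewrite /adm o.
- rewrite /l big_map big_filter -[RHS]s0 big_mkcond /=; apply: eq_bigr => i _.
  rewrite monomE size_nseq; case: ifP => // /negbT /xX0 ->; by rewrite mulr0.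
- by apply/mapP; exists j => //; rewrite mem_filter aj mem_index_iota.
Qed.

Lemma iota_inj : injective iota.
Proof.
move=> u v e; apply/eqP; rewrite -subr_eq0; apply/eqP.
apply: (@U 1 (fun _ => u - v) _ 0) => //.
  by rewrite big_nat1 expr0 mulr1 (morB iota_mor) e subrr.
by rewrite /adm orbT.
Qed.

Definition termB (p : B' * nat) := iota p.1 * x ^+ p.2.

Lemma rep_hom_ex (b : B) : exists s : seq (int * (B' * nat)),
  all (fun q => hd B' q.1 q.2.1) s /\ b = \sum_(q <- s) termB q.2.
Proof.
case: Hiota => _ [_ _ ex _]; case: (ex b) => l [_ ->] {ex}.
elim: l => [|p l [s [hs e]]]; first by exists [::]; rewrite !big_nil.
case: (dsum_ex p.1) => s1 [hs1 e1].
exists ([seq (q.1, (q.2, size p.2)) | q <- s1] ++ s); split.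
  rewrite all_cat hs andbT; apply/allP => q /mapP[q1 q1s ->] /=.
  by move/allP: hs1 => /(_ q1 q1s).
rewrite big_cons big_cat e big_map /=; congr (_ + _).
by rewrite monomE {1}e1 (mor_sum iota_mor) mulr_suml.
Qed.

Lemma rep_ex (b : B) : exists s : seq (B' * nat), b = \sum_(p <- s) termB p.
Proof.
case: (rep_hom_ex b) => s [_ ->]; exists (map snd s); by rewrite big_map.
Qed.

Lemma decomp_sum (T : dga k) (phi : B' -> T) (Hphi : is_dgmor phi) (z : T)
  (s : seq (B' * nat)) N :
  (forall p, p \in s -> (p.2 < N)%N) ->
  \sum_(p <- s) phi p.1 * z ^+ p.2 =
  \sum_(0 <= j < N) phi (\sum_(p <- s) (if p.2 == j then p.1 else 0)) * z ^+ j.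
Proof.
move=> hN.
under [RHS]eq_bigr => j _ do rewrite (mor_sum Hphi) mulr_suml.
rewrite exchange_big /=; apply: eq_big_seq => p ps.
rewrite -(@sum_if_eq _ _ (index_iota 0 N) p.2 (phi p.1 * z ^+ p.2)) ?iota_uniq //;
  last by rewrite mem_index_iota hN.
apply: eq_bigr => j _; rewrite eq_sym; case: eqVneq => [->|_] //.
by rewrite (mor0 Hphi) mul0r.
Qed.

Variables (A : dga k) (h : B' -> A) (Hh : is_dgmor h) (a : A) (ha : hd A r a).

Definition termA (p : B' * nat) := h p.1 * a ^+ p.2.

Lemma aX0 j : ~~ adm j -> a ^+ j = 0.
Proof.
rewrite /adm negb_or negbK -ltnNge => /andP[o j2].
rewrite -(subnK j2) exprD expr2 (sq0 Hk ha o) mulr0 //.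
Qed.

Lemma WD (s : seq (B' * nat)) :
  \sum_(p <- s) termB p = 0 -> \sum_(p <- s) termA p = 0.
Proof.
pose N := (\max_(p <- s) p.2).+1.
have hN : forall p, p \in s -> (p.2 < N)%N.
  by move=> p ps; rewrite ltnS; apply: (@leq_bigmax_seq _ _ xpredT (fun p : B' * nat => p.2)).
rewrite /termB /termA (decomp_sum iota_mor x hN) (decomp_sum Hh a hN) => s0.
rewrite big_nat big1 // => j /andP[_ jN].
case: (boolP (adm j)) => aj.
  by rewrite (U s0 jN aj) (mor0 Hh) mul0r.
by rewrite aX0 // mulr0.
Qed.

Lemma rep_ex' (b : B) : exists s : seq (B' * nat), b == \sum_(p <- s) termB p.
Proof. by case: (rep_ex b) => s e; exists s; apply/eqP. Qed.

Definition rep (b : B) := xchoose (rep_ex' b).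
Definition g (b : B) := \sum_(p <- rep b) termA p.

Lemma gE (b : B) (s : seq (B' * nat)) :
  b = \sum_(p <- s) termB p -> g b = \sum_(p <- s) termA p.
Proof.
move=> e; have /eqP e0 := xchooseP (rep_ex' b).
pose t := rep b ++ map (fun p => (- p.1, p.2)) s.
have EB : \sum_(p <- map (fun p => (- p.1, p.2)) s) termB p = - \sum_(p <- s) termB p.
  by rewrite big_map -sumrN; apply: eq_bigr => p _; rewrite /termB /= (morN iota_mor) mulNr.
have EA : \sum_(p <- map (fun p => (- p.1, p.2)) s) termA p = - \sum_(p <- s) termA p.
  by rewrite big_map -sumrN; apply: eq_bigr => p _; rewrite /termA /= (morN Hh) mulNr.
have : \sum_(p <- t) termB p = 0 by rewrite big_cat /= EB -e0 -e subrr.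
move/WD; rewrite big_cat /= EA => /eqP; rewrite subr_eq0 => /eqP <-; by [].
Qed.

Lemma gD u v : g (u + v) = g u + g v.
Proof.
case: (rep_ex u) => s es; case: (rep_ex v) => t et.
have e : u + v = \sum_(p <- s ++ t) termB p by rewrite big_cat /= -es -et.
by rewrite (gE e) (gE es) (gE et) big_cat.
Qed.
Lemma g0 : g 0 = 0.
Proof. by rewrite (@gE 0 [::]) ?big_nil. Qed.
Lemma gN u : g (- u) = - g u.
Proof. by apply: (addrI (g u)); rewrite -gD !subrr g0. Qed.
Lemma g_sgn z u : g (sgnz B z * u) = sgnz A z * g u.
Proof. by rewrite !sgnzE; case: odd; rewrite ?mulN1r ?mul1r ?gN. Qed.
Lemma g_sum (I : Type) (l : seq I) (P : pred I) (F : I -> B) :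
  g (\sum_(i <- l | P i) F i) = \sum_(i <- l | P i) g (F i).
Proof.
elim: l => [|i l IH]; rewrite ?big_nil ?g0 // !big_cons.
by case: ifP => _; rewrite ?gD IH.
Qed.
Lemma g_term p : g (termB p) = termA p.
Proof. by rewrite (@gE _ [:: p]) ?big_seq1. Qed.
Lemma g_iota c : g (iota c) = h c.
Proof. by have := g_term (c, 0%N); rewrite /termB /termA /= !expr0 !mulr1. Qed.
Lemma g_xX i : g (x ^+ i) = a ^+ i.
Proof.
by have := g_term (1, i); rewrite /termB /termA /= (mor1 iota_mor) (mor1 Hh) !mul1r.
Qed.
Lemma g_x : g x = a.
Proof. by have := g_xX 1; rewrite !expr1. Qed.

Lemma swap_mid (D : dga k) n1 n2 (u v w z : D) : hd D n1 v -> hd D n2 w ->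
  (u * v) * (w * z) = sgnz D (n1 * n2) * ((u * w) * (v * z)).
Proof.
move=> hv hw; rewrite mulrA -(mulrA u) (grcomm hv hw) -!mulrA.
by rewrite !mulrA (sgnzC _ u).
Qed.

Lemma hd_termB m b i : hd B' m b -> hd B (m + r * i%:Z) (termB (b, i)).
Proof. by move=> hb; apply: hdM; [exact: (morhd iota_mor) | exact: hdX hx]. Qed.
Lemma hd_termA m b i : hd B' m b -> hd A (m + r * i%:Z) (termA (b, i)).
Proof. by move=> hb; apply: hdM; [exact: (morhd Hh) | exact: hdX ha]. Qed.

Lemma g_term_mul m' b i b' j : hd B' m' b' ->
  g (termB (b, i) * termB (b', j)) = g (termB (b, i)) * g (termB (b', j)).
Proof.
move=> hb'; rewrite !g_term /termB /termA /=.
rewrite (swap_mid _ _ (hdX i hx) ((morhd iota_mor) _ _ hb')).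
rewrite (swap_mid _ _ (hdX i ha) ((morhd Hh) _ _ hb')) g_sgn.
rewrite -(morM iota_mor) -(morM Hh) -!exprD.
by have := g_term (b * b', (i + j)%N); rewrite /termB /termA /= => ->.
Qed.

Lemma gM u v : g (u * v) = g u * g v.
Proof.
case: (rep_hom_ex u) => s [hs es]; case: (rep_hom_ex v) => t [ht et].
have es' : u = \sum_(p <- map snd s) termB p by rewrite big_map.
have et' : v = \sum_(p <- map snd t) termB p by rewrite big_map.
rewrite (gE es') (gE et') !big_map {1}es {1}et mulr_suml g_sum mulr_suml.
apply: eq_bigr => q _; rewrite mulr_sumr g_sum mulr_sumr.
apply: eq_big_seq => q' q't; rewrite -!g_term.
case: q q' q't => m [b i] [m' [b' j]] q't /=.
by apply: g_term_mul (m') _ _ _ _ _; move/allP: ht => /(_ _ q't).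
Qed.

Lemma g1 : g 1 = 1.
Proof. by rewrite -(mor1 iota_mor) g_iota (mor1 Hh). Qed.
Lemma galg c : g (alg B c) = alg A c.
Proof. by rewrite -(moralg iota_mor) g_iota (moralg Hh). Qed.

Lemma g_hd n u : hd B n u -> hd A n (g u).
Proof.
move=> hu; case: (rep_hom_ex u) => s [hs es].
pose L := [seq (q.1 + r * q.2.2%:Z, termB q.2) | q <- s].
have hL : all (fun p => hd B p.1 p.2) L.
  apply/allP => p /mapP[[m [b i]] qs ->] /=; apply: hd_termB.
  by move/allP: hs => /(_ _ qs).
have eL : u = \sum_(p <- L) p.2 by rewrite big_map.
rewrite (sum_component hL hu eL) big_map g_sum big_seq_cond.
apply: hd_sum => -[m [b i]] /andP[qs /eqP <-]; rewrite g_term.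
by apply: hd_termA; move/allP: hs => /(_ _ qs).
Qed.

Lemma dif1 (D : dga k) : dif D 1 = 0.
Proof.
have := difM 1 (@hd1 _ D); rewrite /sgnz expr0 !mul1r mulr1.
by move=> e; apply: (addrI (dif D 1)); rewrite addr0 -e.
Qed.

Variables (y : B') (hy : iota y = dif B x) (hay : dif A a = h y).

Lemma g_difx : g (dif B x) = dif A a.
Proof. by rewrite -hy g_iota hay. Qed.

Lemma g_difX i : g (dif B (x ^+ i)) = dif A (a ^+ i).
Proof.
elim: i => [|i IH]; first by rewrite !expr0 !dif1 g0.
rewrite !exprS (difM _ hx) (difM _ ha) gD gM g_sgn gM g_difx g_xX g_x IH //.
Qed.

Lemma g_dif u : g (dif B u) = dif A (g u).
Proof.
case: (rep_hom_ex u) => s [hs es].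
have es' : u = \sum_(p <- map snd s) termB p by rewrite big_map.
rewrite (gE es') {1}es dif_sum g_sum big_map dif_sum.
apply: eq_big_seq => -[m [b i]] qs /=.
have hb : hd B' m b by move/allP: hs => /(_ _ qs).
rewrite /termB /termA /= (difM _ ((morhd iota_mor) _ _ hb)) (difM _ ((morhd Hh) _ _ hb)).
rewrite gD gM g_sgn gM -(mordif iota_mor) !g_iota g_xX g_difX (mordif Hh) //.
Qed.

Lemma g_mor : is_dgmor g.
Proof. split; [split; [exact: gD | exact: gM] | exact: g1 | exact: galg | exact: g_hd | exact: g_dif]. Qed.

End Ext.



Section Poly.
Variable R : pzRingType.
Implicit Types p q : seq R.
Lemma pc_padd p q i : pc (padd p q) i = pc p i + pc q i.
Proof.
rewrite /pc /padd; case: (ltnP i (maxn (size p) (size q))) => hi.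
  by rewrite nth_mkseq.
rewrite !nth_default ?addr0 ?size_mkseq //.
  by apply: leq_trans hi; apply: leq_maxr.
by apply: leq_trans hi; apply: leq_maxl.
Qed.
Lemma pc_pscale s p i : pc (pscale s p) i = s * pc p i.
Proof.
rewrite /pc /pscale; case: (ltnP i (size p)) => hi.
  by rewrite (nth_map 0).
by rewrite !nth_default ?mulr0 ?size_map.
Qed.
Lemma pc_pder p i : pc (pder p) i = pc p i.+1 *+ i.+1.
Proof.
rewrite /pc /pder; case: (ltnP i (size p)) => hi.
  by rewrite nth_mkseq.
by rewrite !nth_default ?mul0rn ?size_mkseq // ltnW.
Qed.
Lemma pc_map (d : R -> R) p i : d 0 = 0 -> pc (map d p) i = d (pc p i).
Proof.
move=> d0; rewrite /pc; case: (ltnP i (size p)) => hi.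
  by rewrite (nth_map 0).
by rewrite !nth_default ?size_map.
Qed.
Lemma pc_nil i : pc [::] i = 0 :> R.
Proof. by rewrite /pc nth_nil. Qed.
End Poly.

Section Homot.
Variables (k : fieldType) (Hk : [pchar k] =i pred0) (C B' A : dga k)
  (phi : C -> B') (f : C -> A) (r : int) (y : B')
  (hy : hd B' (r + 1) y) (dy : dif B' y = 0).

Lemma edge_cob P Q : edgeC phi f P Q -> coboundary A r (pev0 (P y) - pev1 (P y)).
Proof.
case=> -[Hadd _ [_ [_ Hdeg]] _ Hdif] _.
have Q0 i : pc (Q 0) i = 0.
  case: (Hadd 0 0) => _; rewrite addr0 => /(_ i); rewrite pc_padd => e.
  by apply: (addrI (pc (Q 0) i)); rewrite addr0 -e.
case: (Hdif _ _ hy) => _ /(_ _) Hd.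
set p := P y; set q := Q y.
pose sg := sgnz A (r + 1).
pose w i := alg A (i.+1%:R^-1) * (- (sg * pc q i)).
have key i : pc p i.+1 = dif A (w i).
  have := Hd i; rewrite dy Q0 pc_padd pc_pscale pc_pder (pc_map _ _ (@dif0 _ A)).
  move=> e.
  have e' : sg * (pc p i.+1 *+ i.+1) = - dif A (pc q i).
    by apply/eqP; rewrite -addr_eq0 -e.
  have e2 : pc p i.+1 *+ i.+1 = sg * - dif A (pc q i).
    by rewrite -e' mulrA sgnz_sq mul1r.
  rewrite /w difZ difN dif_sgn -mulrN -e2.
  by rewrite alg_invn.
exists (- \sum_(0 <= i < size p) w i); split.
  apply: hdN; apply: hd_sum => i _; apply: hdZ; apply: hdN; apply: hd_sgn.
  by have := (Hdeg _ _ hy i).2; rewrite addrK.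
rewrite difN dif_sum /pev0 /pev1 (big_nth 0) -/(pc p _).
have -> : \sum_(0 <= i < size p) nth 0 p i = \sum_(0 <= i < (size p).+1) pc p i.
  by rewrite big_nat_recr //= /pc (nth_default 0 (leqnn _)) addr0.
rewrite big_nat_recl // opprD addrA subrr add0r; congr (- _).
by apply: eq_bigr => i _; rewrite key.
Qed.

Lemma homot_cob h h' : homotopicC phi f h h' -> coboundary A r (h y - h' y).
Proof.
elim=> {h h'}.
- move=> h0 h1 [P [Q [E [e0 e1]]]]; rewrite e0 e1. apply: (edge_cob E).
- by move=> h0; exists 0; rewrite subrr dif0; split => //; apply: hd0.
- move=> h0 h1 _ [w [hw e]]; exists (- w); split; first exact: hdN.
  by rewrite difN -e opprB.
- move=> h0 h1 h2 _ [w1 [hw1 e1]] _ [w2 [hw2 e2]]; exists (w1 + w2); split.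
    exact: hdD.
  by rewrite difD -e1 -e2 addrA subrK.
Qed.
End Homot.



Section Main.
Variables (k : fieldType) (Hk : [pchar k] =i pred0) (B' B : dga k)
  (iota : B' -> B) (r : int) (x : B)
  (Hiota : resolving_wrt iota (fun _ _ : unit => false) (fun _ => r) (fun _ => x)).

Lemma iota_hd_refl m b : hd B m (iota b) -> hd B' m b.
Proof.
move=> hb; case: (dsum_ex b) => s [hs es].
pose L := [seq (q.1, iota q.2) | q <- s].
have hL : all (fun p => hd B p.1 p.2) L.
  apply/allP => p /mapP[q qs ->] /=; apply: (morhd (iota_mor Hiota)).
  by move/allP: hs => /(_ _ qs).
have eL : iota b = \sum_(p <- L) p.2 by rewrite big_map {1}es (mor_sum (iota_mor Hiota)).
have := sum_component hL hb eL; rewrite big_map -(mor_sum (iota_mor Hiota)).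
move/(iota_inj Hk Hiota) ->; rewrite big_seq_cond; apply: hd_sum => q /andP[qs /eqP <-].
by move/allP: hs => /(_ _ qs).
Qed.

Lemma dx_in (HB' : resolving_alg B') (Hr : r <= 0) : exists y, iota y = dif B x.
Proof.
case: (rep_hom_ex Hiota (dif B x)) => s [hs es].
pose L := [seq (q.1 + r * q.2.2%:Z, termB iota x q.2) | q <- s].
have hL : all (fun p => hd B p.1 p.2) L.
  apply/allP => p /mapP[[m [b i]] qs ->] /=; apply: (hd_termB Hiota).
  by move/allP: hs => /(_ _ qs).
have eL : dif B x = \sum_(p <- L) p.2 by rewrite big_map.
have := sum_component hL (hd_dif (hx Hiota)) eL; rewrite big_map => ->.
exists (\sum_(q <- s | q.1 + r * q.2.2%:Z == r + 1) (if q.2.2 == 0%N then q.2.1 else 0)).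
rewrite (mor_sum (iota_mor Hiota)) big_seq_cond [RHS]big_seq_cond; apply: eq_bigr.
move=> -[m [b i]] /andP[qs /eqP e] /=; rewrite /termB /=.
case: eqVneq => [->|ni]; first by rewrite expr0 mulr1.
have hb : hd B' m b by move/allP: hs => /(_ _ qs).
have m0 : 0 < m.
  have i1 : (1 <= i)%N by rewrite lt0n.
  have h2 : r * (i%:Z - 1) <= 0.
    apply: mulr_le0_ge0 => //; rewrite subr_ge0 lez_nat //.
  rewrite mulrBr mulr1 in h2.
  simpl in e; lia.
by rewrite (resolving_pos HB' m0 hb) (mor0 (iota_mor Hiota)) mul0r.
Qed.
End Main.

Unset Implicit Arguments.
Theorem proposition4p15 (k : fieldType) (Hk : [pchar k] =i pred0)
  (C B' B A : dga k) (phi : C -> B') (iota : B' -> B) (f : C -> A)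
  (HC : resolving_alg C) (HB' : resolving_alg B') (HB : resolving_alg B)
  (Hphi : resolving phi) (Hfin : finite_resolving phi)
  (r : int) (x : B) (Hr : r <= 0)
  (Hiota : resolving_wrt iota (fun _ _ : unit => false) (fun _ => r)
             (fun _ => x))
  (Hf : is_dgmor f) :
  (exists y : B', iota y = dif B x) /\
  forall y : B', iota y = dif B x ->
    (* the map [h] |-> [h(dx)] into h^(r+1)(A) is well defined *)
    (forall h : B' -> A, vertexC phi f h ->
       hd A (r + 1) (h y) /\ dif A (h y) = 0) /\
    (forall h h' : B' -> A, vertexC phi f h -> vertexC phi f h' ->
       homotopicC phi f h h' -> coboundary A r (h y - h' y)) /\
    (* exactness in the middle *)
    (forall h : B' -> A, vertexC phi f h ->
       ((exists g : B -> A, vertexC (fun c => iota (phi c)) f g /\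
            homotopicC phi f h (fun b => g (iota b)))
        <-> coboundary A r (h y))).
Proof.
have Hi := iota_mor Hiota.
have hxr := hx Hiota.
split; first exact: (dx_in Hiota HB' Hr).
move=> y hy.
have hy' : hd B' (r + 1) y.
  by apply: (iota_hd_refl Hk Hiota); rewrite hy; apply: hd_dif.
have dy : dif B' y = 0.
  by apply: (iota_inj Hk Hiota); rewrite (mordif Hi) hy difK (mor0 Hi).
split.
  move=> h [Hh _]; split; first exact: (morhd Hh).
  by rewrite -(mordif Hh) dy (mor0 Hh).
split.
  by move=> h h' _ _; apply: homot_cob.
move=> h [Hh hf]; split.
- case=> g0 [[Hg _] Hhom].
  have [w [hw e]] := homot_cob Hk hy' dy Hhom.
  exists (w + g0 x); split; first by apply: hdD => //; apply: (morhd Hg).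
  by rewrite difD -e -(mordif Hg) -hy subrK.
- case=> a0 [ha0 ea].
  pose G := g Hiota h a0.
  have HG : is_dgmor G := g_mor Hk Hiota Hh ha0 hy (esym ea).
  have GE : (fun b => G (iota b)) = h.
    by apply: functional_extensionality => b; rewrite /G (g_iota Hk Hiota Hh ha0).
  exists G; split; last by rewrite GE; apply: rst_refl.
  split => // c; by rewrite /G (g_iota Hk Hiota Hh ha0) hf.
Qed.
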